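(* Let $h:(\mathbb{R}^n,0)\to(\mathbb{R}^n,0)$ be a Lipschitz homeomorphism germ such that $c_1\|x\|\le\|h(x)\|\le c_2\|x\|$ for some constants $c_1,c_2>0$ and all $x$ in a neighbourhood of $0$, and let $A\subset\mathbb{R}^n$ be a set-germ at $0$ with $0\in\overline{A}$. Suppose that $A$ satisfies condition (SSP) and that $h$ is an (SSP) map. Then $h(A)$ satisfies condition (SSP).
   Context: For a set-germ $A\subset\mathbb{R}^k$ at $0$ with $0\in\overline A$, $D(A)=\{a\in S^{k-1}:\exists\, x_i\in A\setminus\{0\},\ x_i\to0,\ x_i/\|x_i\|\to a\}$. For sequences, $\|u_m\|\ll\|v_m\|,\|w_m\|$ means $\|u_m\|/\|v_m\|\to0$ and $\|u_m\|/\|w_m\|\to0$. A set-germ $A\subset\mathbb{R}^k$ satisfies condition (SSP) if for every sequence $a_m\in\mathbb{R}^k$ tending to $0$ with $\lim a_m/\|a_m\|\in D(A)$ there is a sequence $b_m\in A$ with $\|a_m-b_m\|\ll\|a_m\|,\|b_m\|$. A map germ $h:(\mathbb{R}^n,0)\to(\mathbb{R}^n,0)$ is an (SSP) map if its graph $\{(x,h(x))\}\subset\mathbb{R}^n\times\mathbb{R}^n$ satisfies condition (SSP) at $(0,0)$. *)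

(* Defs.v *)
From HB Require Import structures.
From mathcomp Require Import all_boot all_order all_algebra.
From mathcomp Require Import all_classical all_reals all_analysis.
Set Implicit Arguments. Unset Strict Implicit. Unset Printing Implicit Defensive.
Import Order.TTheory GRing.Theory Num.Theory.
Import numFieldNormedType.Exports.
Local Open Scope classical_set_scope.
Local Open Scope ring_scope.

Section SSPDefs.
Variable R : realType.

Definition enorm (k : nat) (v : 'rV[R]_k) : R :=
  Num.sqrt (\sum_(i < k) (v ord0 i) ^+ 2).

Definition eball0 (k : nat) (r : R) : set 'rV[R]_k := [set x | enorm x < r].

Definition Dir (k : nat) (A : set 'rV[R]_k) : set 'rV[R]_k :=
  [set a | enorm a = 1 /\
     exists x : nat -> 'rV[R]_k,
       (forall i, A (x i) /\ x i != 0) /\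
       x @ \oo --> (0 : 'rV[R]_k) /\
       (fun i => (enorm (x i))^-1 *: x i) @ \oo --> a].

(* ||u_m|| << ||v_m|| : ||u_m|| / ||v_m|| -> 0, stated without division *)
Definition ll (k : nat) (u v : nat -> 'rV[R]_k) : Prop :=
  forall e : R, 0 < e -> \forall m \near \oo, enorm (u m) <= e * enorm (v m).

Definition SSP (k : nat) (A : set 'rV[R]_k) : Prop :=
  forall (a : nat -> 'rV[R]_k) (d : 'rV[R]_k),
    a @ \oo --> (0 : 'rV[R]_k) ->
    (fun m => (enorm (a m))^-1 *: a m) @ \oo --> d ->
    Dir A d ->
    exists b : nat -> 'rV[R]_k,
      (forall m, A (b m)) /\
      ll (fun m => a m - b m) a /\ ll (fun m => a m - b m) b.

(* graph of h over U, as a subset of R^n x R^n = R^(n+n) *)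
Definition graph (n : nat) (h : 'rV[R]_n -> 'rV[R]_n) (U : set 'rV[R]_n)
  : set 'rV[R]_(n + n) :=
  [set row_mx x (h x) | x in U].

End SSPDefs.

(* Main.v *)
Require Import Defs.
From HB Require Import structures.
From mathcomp Require Import all_boot all_order all_algebra.
From mathcomp Require Import all_classical all_reals all_analysis.
Import Order.TTheory GRing.Theory Num.Theory.
Import numFieldNormedType.Exports.
From mathcomp Require Import lra.
Local Open Scope classical_set_scope.
Local Open Scope ring_scope.

Set Implicit Arguments. Unset Strict Implicit.

Section H.
Variable R : realType.

Lemma coord_le k (v : 'rV[R]_k) i : `|v ord0 i| <= `|v|.
Proof.
by rewrite [leRHS]/Num.Def.normr /= mx_normrE; apply/bigmax_geP; right => /=; exists (ord0, i).
Qed.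

Lemma norm_le_bound k (v : 'rV[R]_k) c : 0 <= c -> (forall i, `|v ord0 i| <= c) -> `|v| <= c.
Proof.
move=> c0 H; rewrite /Num.Def.normr/= mx_normrE (bigmax_le _ c0) // => -[i j] _ /=.
by rewrite (ord1 i).
Qed.

Lemma enorm_ge0 k (v : 'rV[R]_k) : 0 <= enorm v.
Proof. exact: sqrtr_ge0. Qed.

Lemma coord_le_enorm k (v : 'rV[R]_k) i : `|v ord0 i| <= enorm v.
Proof.
rewrite -sqrtr_sqr /enorm; apply: ler_wsqrtr.
rewrite (bigD1 i) //= lerDl; apply: sumr_ge0 => j _; exact: sqr_ge0.
Qed.

Lemma norm_le_enorm k (v : 'rV[R]_k) : `|v| <= enorm v.
Proof. apply: norm_le_bound; [exact: enorm_ge0| exact: coord_le_enorm]. Qed.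

Lemma enorm_le k (v : 'rV[R]_k) : enorm v <= k%:R * `|v|.
Proof.
have h1 : \sum_(i < k) (v ord0 i) ^+ 2 <= \sum_(i < k) `|v| ^+ 2.
  apply: ler_sum => i _; rewrite -real_normK ?num_real //.
  have := coord_le v i; have := normr_ge0 (v ord0 i); nra.
rewrite sumr_const card_ord in h1.
rewrite /enorm -(@ger0_norm _ (k%:R * `|v|)); last by rewrite mulr_ge0.
rewrite -sqrtr_sqr; apply: ler_wsqrtr; apply: (le_trans h1).
have hk : (k%:R : R) <= k%:R ^+ 2.
  case: k {h1 v} => [|k]; first by rewrite expr2 mulr0.
  by rewrite expr2 ler_peMl // ler1n.
rewrite -mulr_natl exprMn; have := sqr_ge0 `|v|; nra.
Qed.

Lemma enormZ k (c : R) (v : 'rV[R]_k) : enorm (c *: v) = `|c| * enorm v.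
Proof.
rewrite /enorm (eq_bigr (fun i => c ^+ 2 * (v ord0 i) ^+ 2)); last first.
  by move=> i _; rewrite mxE exprMn.
by rewrite -mulr_sumr sqrtrM ?sqr_ge0 // sqrtr_sqr.
Qed.

Lemma enorm_eq0 k (v : 'rV[R]_k) : enorm v = 0 -> v = 0.
Proof.
move=> e0; apply/rowP => i; rewrite mxE; apply/eqP; rewrite -normr_eq0 eq_le normr_ge0 andbT.
by rewrite -e0 coord_le_enorm.
Qed.

Lemma enorm0 k : enorm (0 : 'rV[R]_k) = 0.
Proof. by rewrite -(scale0r (0 : 'rV[R]_k)) enormZ normr0 mul0r. Qed.

Lemma sum_cont_seq (I : Type) (s : seq I) (T : topologicalType) (f : I -> T -> R) :
  (forall i, continuous (f i)) -> continuous (fun x => \sum_(i <- s) f i x).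
Proof.
move=> fc; elim: s => [|i s IH].
  under eq_fun do rewrite big_nil; exact: cst_continuous.
under eq_fun do rewrite big_cons.
by move=> x; apply: continuousD; [exact: fc | exact: IH].
Qed.

Lemma sum_cont k (T : topologicalType) (f : 'I_k -> T -> R) :
  (forall i, continuous (f i)) -> continuous (fun x => \sum_(i < k) f i x).
Proof. exact: sum_cont_seq. Qed.

Lemma enorm_cont k : continuous (@enorm R k).
Proof.
move=> x; apply: continuous_comp; last exact: sqrt_continuous.
apply: sum_cont => i y; apply: continuousM; exact: coord_continuous.
Qed.


Lemma enorm_leS k (v : 'rV[R]_k) : enorm v <= k.+1%:R * `|v|.
Proof.
apply: (le_trans (enorm_le v)); apply: ler_wpM2r; first exact: normr_ge0.
by rewrite ler_nat.
Qed.

Lemma enorm_gt0 k (v : 'rV[R]_k) : v != 0 -> 0 < enorm v.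
Proof.
move=> v0; rewrite lt_def enorm_ge0 andbT; apply/eqP => /enorm_eq0 e0.
by rewrite e0 eqxx in v0.
Qed.

Definition nz k (x : 'rV[R]_k) := (enorm x)^-1 *: x.

Lemma nzZ k (c : R) (x : 'rV[R]_k) : 0 < c -> nz (c *: x) = nz x.
Proof.
move=> c0; rewrite /nz enormZ gtr0_norm // invfM scalerA mulrAC mulVf ?mul1r //.
by rewrite gt_eqF.
Qed.

Lemma enorm_nz k (x : 'rV[R]_k) : x != 0 -> enorm (nz x) = 1.
Proof.
move=> x0; rewrite /nz enormZ ger0_norm ?invr_ge0 ?enorm_ge0 // mulVf //.
by rewrite gt_eqF // enorm_gt0.
Qed.

Lemma nz_cont k (x : 'rV[R]_k) : x != 0 -> nz y @[y --> x] --> nz x.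
Proof.
move=> x0; rewrite /nz.
have H1 : (enorm y)^-1 @[y --> x] --> (enorm x)^-1.
  have hx : enorm x != 0 by have := enorm_gt0 x0; rewrite lt0r => /andP[].
  have HC : enorm y @[y --> x] --> enorm x by exact: enorm_cont.
  exact: (cvgV hx HC).
exact: (cvgZ H1 cvg_id).
Qed.

Lemma subseq_near (s : nat -> nat) (P : nat -> Prop) :
  (forall j, (j <= s j)%N) -> (\forall i \near \oo, P i) -> \forall j \near \oo, P (s j).
Proof.
move=> hs [N _ HN]; exists N => // j /= Nj; apply: HN => /=.
exact: (leq_trans Nj (hs j)).
Qed.

Lemma subseq_cvg k (s : nat -> nat) (f : nat -> 'rV[R]_k) (l : 'rV[R]_k) :
  (forall j, (j <= s j)%N) -> f @ \oo --> l -> (fun j => f (s j)) @ \oo --> l.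
Proof.
move=> hs fl; apply/cvgrPdist_le => e e0.
by apply: (subseq_near (P := fun i => `|l - f i| <= e)) => //; move/cvgrPdist_le : fl; apply.
Qed.

Lemma norm_row_mx_le k (a b : 'rV[R]_k) : `|row_mx a b| <= `|a| + `|b|.
Proof.
apply: norm_le_bound; first by rewrite addr_ge0.
move=> i; case: (split_ordP i) => j ->.
  by rewrite row_mxEl (le_trans (coord_le a j)) // lerDl.
by rewrite row_mxEr (le_trans (coord_le b j)) // lerDr.
Qed.

Lemma norm_row_mxl k (a b : 'rV[R]_k) : `|a| <= `|row_mx a b|.
Proof.
apply: norm_le_bound => // i; by rewrite -(row_mxEl a b) coord_le.
Qed.

Lemma norm_row_mxr k (a b : 'rV[R]_k) : `|b| <= `|row_mx a b|.
Proof.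
apply: norm_le_bound => // i; by rewrite -(row_mxEr a b) coord_le.
Qed.

Lemma ll_sll k (u v : nat -> 'rV[R]_k) : ll u v ->
  forall e, 0 < e -> \forall m \near \oo, `|u m| <= e * `|v m|.
Proof.
move=> H e e0; have K0 : (0 : R) < k.+1%:R by rewrite ltr0n.
have := H (e / k.+1%:R); rewrite divr_gt0 // => /(_ isT); apply: filterS => m hm.
apply: (le_trans (norm_le_enorm _)); apply: (le_trans hm).
have := enorm_leS (v m); have := normr_ge0 (v m).
have c0 : 0 <= e / k.+1%:R by rewrite divr_ge0 // ltW.
have eE : e = (e / k.+1%:R) * k.+1%:R by rewrite mulfVK // gt_eqF.
move: (e / k.+1%:R) c0 eE hm => c c0 -> hm; nra.
Qed.

Lemma sll_ll k (u v : nat -> 'rV[R]_k) :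
  (forall e, 0 < e -> \forall m \near \oo, `|u m| <= e * `|v m|) -> ll u v.
Proof.
move=> H e e0; have K0 : (0 : R) < k.+1%:R by rewrite ltr0n.
have := H (e / k.+1%:R); rewrite divr_gt0 // => /(_ isT); apply: filterS => m hm.
apply: (le_trans (enorm_leS _)).
have := norm_le_enorm (v m); have := normr_ge0 (v m).
have c0 : 0 <= e / k.+1%:R by rewrite divr_ge0 // ltW.
have eE : e = (e / k.+1%:R) * k.+1%:R by rewrite mulfVK // gt_eqF.
move: (e / k.+1%:R) c0 eE hm => c c0 -> hm _ vn.
rewrite (mulrC c) -mulrA ler_pM2l //; apply: (le_trans hm); exact: ler_wpM2l.
Qed.


Lemma dir_lift n (h : 'rV[R]_n -> 'rV[R]_n) (A : set 'rV[R]_n) (r c1 c2 : R) d :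
  0 < c1 -> 0 < c2 -> h 0 = 0 ->
  (forall x, eball0 r x -> c1 * enorm x <= enorm (h x) /\ enorm (h x) <= c2 * enorm x) ->
  Dir (h @` (A `&` eball0 r)) d ->
  exists w : 'rV[R]_n, w != 0 /\ Dir A (nz w) /\ Dir (graph h (eball0 r)) (nz (row_mx w d)).
Proof.
move=> c10 c20 h0 hc [d1 [s [Hs [s0 sd]]]].
have /choice [y Hy] : forall j, exists y, (A `&` eball0 r) y /\ h y = s j.
  by move=> j; case: (Hs j).1 => y Ay <-; exists y.
have sn0 j : s j != 0 by case: (Hs j).
have spos j : 0 < enorm (s j) by apply: enorm_gt0.
have yb j : enorm (y j) <= enorm (s j) / c1.
  have [[_ By] <-] := Hy j; rewrite ler_pdivlMr //; rewrite mulrC; exact: (hc _ By).1.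
have yb2 j : enorm (s j) <= c2 * enorm (y j).
  have [[_ By] <-] := Hy j; exact: (hc _ By).2.
pose v j := (enorm (s j))^-1 *: y j.
have ve j : enorm (v j) = enorm (y j) / enorm (s j).
  by rewrite /v enormZ ger0_norm ?invr_ge0 ?enorm_ge0 // mulrC.
have vub j : `|v j| <= c1^-1.
  apply: (le_trans (norm_le_enorm _)); rewrite ve ler_pdivrMr //.
  by rewrite mulrC; exact: yb.
have vlb j : c2^-1 / n.+1%:R <= `|v j|.
  rewrite ler_pdivrMr ?ltr0n // mulrC; apply: (le_trans _ (enorm_leS (v j))).
  rewrite ve ler_pdivlMr // mulrC ler_pdivrMr // mulrC; exact: yb2.
have Ccpt : compact (closed_ball (0 : 'rV[R]_n) c1^-1).
  apply: bounded_closed_compact; last exact: closed_ball_closed.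
  exists c1^-1; split; first exact: num_real.
  move=> M hM x; rewrite closed_ballE ?invr_gt0 // /closed_ball_ /= sub0r normrN => hx.
  exact: (le_trans hx (ltW hM)).
have [w [_ clw]] : closed_ball (0 : 'rV[R]_n) c1^-1 `&` cluster (v @ \oo) !=set0.
  apply: Ccpt; exists 0%N => // j _ /=; rewrite closed_ballE ?invr_gt0 // /closed_ball_ /= sub0r normrN.
  exact: vub.
have /choice [sg Hsg] : forall j, exists i, (j <= i)%N /\ `|w - v i| < j.+1%:R^-1.
  move=> j.
  have : (v @ \oo) [set v i | i in [set i | (j <= i)%N]].
    by exists j => // i /= ji; exists i.
  have Hb : nbhs w (ball w j.+1%:R^-1) by apply: nbhsx_ballx; rewrite invr_gt0 ltr0n.
  move=> HA; have [z [[i ji <-]]] := clw _ _ HA Hb; rewrite -ball_normE /= => hz; exists i; split => //.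
have vw : (fun j => v (sg j)) @ \oo --> w.
  apply/cvgrPdist_le => e e0.
  apply: filterS (near_infty_natSinv_lt (PosNum e0)) => j hj /=.
  exact: ltW (lt_trans (Hsg j).2 hj).
have sgj j : (j <= sg j)%N by case: (Hsg j).
have q0 : 0 < c2^-1 / n.+1%:R by rewrite divr_gt0 ?invr_gt0 ?ltr0n.
have w0 : w != 0.
  have [N _ HN] := near_infty_natSinv_lt (PosNum q0).
  have hN := HN N (leqnn N); have hs := (Hsg N).2; have hl := vlb (sg N).
  have := ler_normD w (v (sg N) - w); rewrite addrC subrK distrC => tri.
  rewrite -normr_gt0; have hN2 : N.+1%:R^-1 < c2^-1 / n.+1%:R by exact: hN.
  have : `|w - v (sg N)| < `|v (sg N)| by apply: (lt_trans hs); apply: (lt_le_trans hN2 hl).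
  rewrite -subr_gt0 => /lt_le_trans; apply; by rewrite lerBlDr.
have ss0 : (fun j => s (sg j)) @ \oo --> (0 : 'rV[R]_n) by exact: (subseq_cvg (f := s) sgj s0).
have ssd : (fun j => nz (s (sg j))) @ \oo --> d by exact: (subseq_cvg (f := fun j => nz (s j)) sgj sd).
have ys0 : (fun j => y (sg j)) @ \oo --> (0 : 'rV[R]_n).
  apply/cvgr0Pnorm_le => e e0.
  move/cvgr0Pnorm_le : ss0 => /(_ (e * c1 / n.+1%:R)).
  rewrite !divr_gt0 ?mulr_gt0 ?ltr0n // => /(_ isT).
  apply: filterS => j hj.
  apply: (le_trans (norm_le_enorm _)); apply: (le_trans (yb _)).
  rewrite ler_pdivrMr //; apply: (le_trans (enorm_leS _)).
  by rewrite mulrC -ler_pdivlMr ?ltr0n.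
have nzy j : nz (y (sg j)) = nz (v (sg j)).
  by rewrite /v nzZ // invr_gt0.
exists w; split => //; split.
  split; first exact: enorm_nz.
  exists (fun j => y (sg j)); split; [|split] => //.
    move=> j; split; first exact: (Hy (sg j)).1.1.
    apply/eqP => y0; move: (sn0 (sg j)); by rewrite -(Hy (sg j)).2 y0 h0 eqxx.
  apply: (cvg_trans _ (cvg_comp _ _ vw (nz_cont w0))).
  apply: near_eq_cvg; exists 0%N => // j _ /=; by rewrite -nzy.
have W0 : row_mx w d != 0.
  apply/eqP => W0; have := norm_row_mxl w d; rewrite W0 normr0 normr_le0.
  by rewrite (negPf w0).
split; first exact: enorm_nz.
exists (fun j => row_mx (y (sg j)) (s (sg j))); split; [|split].
- move=> j; split.
    by exists (y (sg j)); [exact: (Hy _).1.2 | rewrite (Hy _).2].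
  apply/eqP => P0; have := norm_row_mxr (y (sg j)) (s (sg j)).
  by rewrite P0 normr0 normr_le0 (negPf (sn0 _)).
- apply/cvgr0Pnorm_le => e e0.
  move/cvgr0Pnorm_le : ss0 => /(_ (e / 2)); rewrite divr_gt0 // => /(_ isT) h1.
  move/cvgr0Pnorm_le : ys0 => /(_ (e / 2)); rewrite divr_gt0 // => /(_ isT) h2.
  move: h1 h2; apply: filterS2 => j hj1 hj2.
  apply: (le_trans (norm_row_mx_le _ _)); lra.
- have QW : (fun j => row_mx (v (sg j)) (nz (s (sg j)))) @ \oo --> row_mx w d.
    apply/cvgrPdist_le => e e0.
    move/cvgrPdist_le : vw => /(_ (e / 2)); rewrite divr_gt0 // => /(_ isT) h1.
    move/cvgrPdist_le : ssd => /(_ (e / 2)); rewrite divr_gt0 // => /(_ isT) h2.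
    move: h1 h2; apply: filterS2 => j hj1 hj2.
    rewrite opp_row_mx add_row_mx; apply: (le_trans (norm_row_mx_le _ _)); lra.
  apply: (cvg_trans _ (cvg_comp _ _ QW (nz_cont W0))).
  apply: near_eq_cvg; exists 0%N => // j _ /=.
  change (nz (row_mx (v (sg j)) (nz (s (sg j)))) = nz (row_mx (y (sg j)) (s (sg j)))).
  rewrite -(nzZ (row_mx (v (sg j)) (nz (s (sg j)))) (spos (sg j))); congr nz.
  have ne : enorm (s (sg j)) != 0 by rewrite gt_eqF.
  by rewrite scale_row_mx /v /nz !scalerA mulfV // !scale1r.
Qed.

Lemma norm_tri k (p q : 'rV[R]_k) : `|q| <= `|p| + `|p - q|.
Proof. by have := ler_normD p (q - p); rewrite addrC subrK distrC. Qed.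

Lemma dom_cvg0 k1 k2 (u : nat -> 'rV[R]_k1) (a : nat -> 'rV[R]_k2) (C : R) :
  0 <= C -> (\forall m \near \oo, `|u m| <= C * `|a m|) ->
  a @ \oo --> (0 : 'rV[R]_k2) -> u @ \oo --> (0 : 'rV[R]_k1).
Proof.
move=> C0 hu a0; apply/cvgr0Pnorm_le => e e0.
move/cvgr0Pnorm_le : a0 => /(_ (e / (C + 1))); rewrite divr_gt0 ?ltr_wpDl // => /(_ isT) ha.
move: hu ha; apply: filterS2 => m h1 h2; apply: (le_trans h1).
have := normr_ge0 (a m); have : e / (C + 1) * (C + 1) = e by rewrite divfK // gt_eqF // ltr_wpDl.
move: (e / (C + 1)) h2 => q h2 qe ?; nra.
Qed.

Lemma sll_dom k1 k2 k3 (u : nat -> 'rV[R]_k1) (v : nat -> 'rV[R]_k2) (a : nat -> 'rV[R]_k3) (C : R) :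
  (forall e, 0 < e -> \forall m \near \oo, `|u m| <= e * `|v m|) -> 0 <= C ->
  (\forall m \near \oo, `|v m| <= C * `|a m|) ->
  forall e, 0 < e -> \forall m \near \oo, `|u m| <= e * `|a m|.
Proof.
move=> H C0 hv e e0.
have := H (e / (C + 1)); rewrite divr_gt0 ?ltr_wpDl // => /(_ isT) hu.
move: hu hv; apply: filterS2 => m h1 h2.
have := normr_ge0 (a m); have := normr_ge0 (v m).
have : e / (C + 1) * (C + 1) = e by rewrite divfK // gt_eqF // ltr_wpDl.
have : 0 < e / (C + 1) by rewrite divr_gt0 // ltr_wpDl.
move: (e / (C + 1)) h1 => q h1 q0 qe ? ?; nra.
Qed.


Lemma main_ssp n (h : 'rV[R]_n -> 'rV[R]_n) (A : set 'rV[R]_n) (r c1 c2 L : R) :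
  0 < r -> 0 < c1 -> 0 < c2 -> 0 <= L -> h 0 = 0 ->
  (forall x y, eball0 r x -> eball0 r y -> enorm (h x - h y) <= L * enorm (x - y)) ->
  (forall x, eball0 r x -> c1 * enorm x <= enorm (h x) /\ enorm (h x) <= c2 * enorm x) ->
  SSP A -> SSP (graph h (eball0 r)) -> SSP (h @` (A `&` eball0 r)).
Proof.
move=> r0 c10 c20 L0 h0 hL hc SA SG a d a0 ad Dd.
have [w [w0 [DAw DGw]]] := dir_lift c10 c20 h0 hc Dd.
have d0 : d != 0 by apply/eqP => d0; move: Dd.1; rewrite d0 enorm0 => /eqP; rewrite eq_sym oner_eq0.
have K0 : (0 : R) < n.+1%:R by rewrite ltr0n.
have an0 : \forall m \near \oo, a m != 0.
  move/cvgrPdist_le : ad => /(_ (`|d| / 2)); rewrite divr_gt0 ?normr_gt0 // => /(_ isT).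
  apply: filterS => m hm; apply/eqP => am; move: hm.
  rewrite am scaler0 subr0 ler_pdivlMr // => hd.
  have : 0 < `|d| by rewrite normr_gt0.
  lra.
pose t m := enorm (a m).
have tle m : t m <= n.+1%:R * `|a m| by exact: enorm_leS.
have tge m : `|a m| <= t m by exact: norm_le_enorm.
have t0 m : 0 <= t m by exact: enorm_ge0.
pose W := row_mx w d.
pose z m := t m *: W.
have zb : \forall m \near \oo, `|z m| <= (n.+1%:R * `|W|) * `|a m|.
  apply: nearW => m; rewrite normrZ ger0_norm // mulrAC.
  by apply: ler_wpM2r => //; rewrite mulrC.
have [b [Gb [llzb _]]] : exists b, (forall m, graph h (eball0 r) (b m)) /\
    ll (fun m => z m - b m) z /\ ll (fun m => z m - b m) b.
  apply: (SG z (nz W)) => //.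
  - apply: (dom_cvg0 _ zb a0); by rewrite mulr_ge0 // ltW.
  - apply/cvgrPdist_le => e e0; move: an0; apply: filterS => m am.
    have tp : 0 < t m by exact: enorm_gt0.
    by rewrite -[X in `|_ - X|]/(nz (z m)) /z nzZ // subrr normr0 ltW.
have /choice [x Hx] : forall m, exists x, eball0 r x /\ row_mx x (h x) = b m.
  by move=> m; case: (Gb m) => x Bx <-; exists x.
have Zb := sll_dom (ll_sll llzb) (mulr_ge0 (ltW K0) (normr_ge0 W)) zb.
have E1 : forall e, 0 < e -> \forall m \near \oo, `|t m *: w - x m| <= e * `|a m|.
  move=> e e0; apply: filterS (Zb e e0) => m hm; apply: le_trans hm.
  rewrite -(Hx m).2 /z /W scale_row_mx opp_row_mx add_row_mx; exact: norm_row_mxl.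
have E2 : forall e, 0 < e -> \forall m \near \oo, `|t m *: d - h (x m)| <= e * `|a m|.
  move=> e e0; apply: filterS (Zb e e0) => m hm; apply: le_trans hm.
  rewrite -(Hx m).2 /z /W scale_row_mx opp_row_mx add_row_mx; exact: norm_row_mxr.
pose C1 := n.+1%:R * `|w| + 1.
have C10 : 0 <= C1 by rewrite /C1 addr_ge0 ?mulr_ge0 // ltW.
have xb : \forall m \near \oo, `|x m| <= C1 * `|a m|.
  apply: filterS (E1 1 ltr01) => m hm.
  apply: (le_trans (norm_tri (t m *: w) _)); rewrite normrZ ger0_norm //.
  have := tle m; have := normr_ge0 w; have := normr_ge0 (a m); rewrite /C1; nra.
have x0 : x @ \oo --> (0 : 'rV[R]_n) by exact: (dom_cvg0 C10 xb a0).
pose eps m := (t m)^-1 *: (x m - t m *: w).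
have Ew : (fun m => w + eps m) @ \oo --> w.
  apply/cvgrPdist_le => e e0; move: an0 (E1 e e0); apply: filterS2 => m am hm.
  have tp : 0 < t m by exact: enorm_gt0.
  rewrite opprD addrA subrr add0r normrN /eps normrZ ger0_norm ?invr_ge0 // distrC.
  rewrite mulrC ler_pdivrMr //; apply: (le_trans hm); rewrite ler_pM2l //; exact: tge.
have xw : (fun m => nz (x m)) @ \oo --> nz w.
  apply: (cvg_trans _ (cvg_comp _ _ Ew (nz_cont w0))).
  apply: near_eq_cvg; move: an0; apply: filterS => m am /=.
  have tp : 0 < t m by exact: enorm_gt0.
  rewrite -(nzZ (w + eps m) tp) /eps scalerDr scalerA mulfV ?gt_eqF // scale1r.
  by rewrite addrC subrK.
have [b' [Ab' [llxb _]]] := SA x (nz w) x0 xw DAw.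
have E3 := sll_dom (ll_sll llxb) C10 xb.
have b'0 : b' @ \oo --> (0 : 'rV[R]_n).
  have hb : \forall m \near \oo, `|b' m| <= (C1 + 1) * `|a m|.
    move: xb (E3 1 ltr01); apply: filterS2 => m h1 h2.
    apply: (le_trans (norm_tri (x m) _)); rewrite mulrDl mul1r; rewrite mul1r in h2; exact: lerD.
  apply: (dom_cvg0 _ hb a0); by rewrite addr_ge0.
have b'B : \forall m \near \oo, eball0 r (b' m).
  move/cvgr0Pnorm_le : b'0 => /(_ (r / 2 / n.+1%:R)); rewrite !divr_gt0 // => /(_ isT).
  apply: filterS => m hm; rewrite /eball0 /=; apply: (le_lt_trans (enorm_leS _)).
  rewrite ler_pdivlMr // in hm; rewrite mulrC; apply: (le_lt_trans hm); lra.
have [sq [Hsq _]] := Dd.2.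
pose bb m := if enorm (b' m) < r then h (b' m) else sq 0%N.
have Sbb m : (h @` (A `&` eball0 r)) (bb m).
  rewrite /bb; case: ifP => hb; last exact: (Hsq 0%N).1.
  by exists (b' m).
have LK0 : 0 <= L * n.+1%:R by rewrite mulr_ge0 // ltW.
have Main : forall e, 0 < e -> \forall m \near \oo, `|a m - bb m| <= e * `|a m|.
  move=> e e0.
  have [e1 [e10 ee]] : exists e1, 0 < e1 /\ e1 * (2 + L * n.+1%:R) = e.
    have p : 0 < 2 + L * n.+1%:R by rewrite ltr_wpDr.
    exists (e / (2 + L * n.+1%:R)); split; first by rewrite divr_gt0.
    by rewrite divfK // gt_eqF.
  have ad' : \forall m \near \oo, `|d - nz (a m)| <= e1 / n.+1%:R.
    by move/cvgrPdist_le : ad; apply; rewrite divr_gt0.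
  near=> m.
  have am : a m != 0 by near: m; exact: an0.
  have hb : enorm (b' m) < r by near: m; exact: b'B.
  have h1 : `|d - nz (a m)| <= e1 / n.+1%:R by near: m; exact: ad'.
  have h2 : `|t m *: d - h (x m)| <= e1 * `|a m| by near: m; exact: E2.
  have h3 : `|x m - b' m| <= e1 * `|a m| by near: m; exact: E3.
  rewrite /bb hb.
  have tp : 0 < t m by exact: enorm_gt0.
  have B1 : `|a m - t m *: d| <= e1 * `|a m|.
    have -> : a m - t m *: d = t m *: (nz (a m) - d).
      by rewrite scalerBr /nz scalerA mulfV ?gt_eqF // scale1r.
    rewrite normrZ ger0_norm // distrC.
    apply: (le_trans (ler_wpM2l (t0 m) h1)); apply: (le_trans (ler_wpM2r _ (tle m))).
      by rewrite divr_ge0 // ltW.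
    by rewrite mulrC mulrA divfK ?gt_eqF // mulrC.
  have B3 : `|h (x m) - h (b' m)| <= L * n.+1%:R * e1 * `|a m|.
    apply: (le_trans (norm_le_enorm _)); apply: (le_trans (hL _ _ (Hx m).1 hb)).
    apply: (le_trans (ler_wpM2l L0 (enorm_leS _))).
    rewrite -!mulrA; apply: ler_wpM2l => //; apply: ler_wpM2l => //; exact: ltW.
  have -> : a m - h (b' m) = (a m - t m *: d) + (t m *: d - h (x m)) + (h (x m) - h (b' m)).
    by rewrite !addrA !subrK.
  apply: (le_trans (ler_normD _ _)); apply: (le_trans (lerD (ler_normD _ _) (lexx _))).
  have := normr_ge0 (a m); nra.
exists bb; split => //; split.
  exact: sll_ll Main.
apply: sll_ll => e e0.
have e10 : 0 < e / (2 * e + 2) by rewrite divr_gt0 // addr_gt0 // mulr_gt0.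
have ea : e / (2 * e + 2) <= 1 / 2.
  rewrite ler_pdivrMr ?addr_gt0 ?mulr_gt0 //; lra.
have eb : 2 * (e / (2 * e + 2)) <= e.
  rewrite mulrA ler_pdivrMr ?addr_gt0 ?mulr_gt0 //; nra.
move: (e / (2 * e + 2)) e10 ea eb => e1 e10 ea eb.
apply: filterS (Main _ e10) => m hm.
have := norm_tri (bb m) (a m); rewrite distrC => tri.
have := normr_ge0 (a m); have := normr_ge0 (bb m); have := normr_ge0 (a m - bb m).
nra.
Unshelve. all: by end_near.
Qed.

End H.

Unset Implicit Arguments. Set Strict Implicit.

Theorem theorem4p5 (R : realType) (n : nat) (h : 'rV[R]_n -> 'rV[R]_n)
    (A : set 'rV[R]_n) (r : R) :
  0 < r ->
  h 0 = 0 ->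
  (* h is a homeomorphism from the ball B_r onto the open set h(B_r) *)
  {in eball0 r &, injective h} ->
  {within eball0 r, continuous h} ->
  open (h @` eball0 r) ->
  (exists g : 'rV[R]_n -> 'rV[R]_n,
      (forall x, eball0 r x -> g (h x) = x) /\
      {within h @` eball0 r, continuous g}) ->
  (* h is Lipschitz on B_r *)
  (exists L : R, 0 <= L /\ forall x y, eball0 r x -> eball0 r y ->
      enorm (h x - h y) <= L * enorm (x - y)) ->
  (* c1 |x| <= |h x| <= c2 |x| on B_r *)
  (exists c1 c2 : R, 0 < c1 /\ 0 < c2 /\ forall x, eball0 r x ->
      c1 * enorm x <= enorm (h x) /\ enorm (h x) <= c2 * enorm x) ->
  closure A 0 ->
  SSP A ->
  SSP (graph h (eball0 r)) ->
  SSP (h @` (A `&` eball0 r)).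
Proof.
move=> r0 h0 _ _ _ _ [L [L0 hL]] [c1 [c2 [c10 [c20 hc]]]] _ SA SG.
exact: (main_ssp r0 c10 c20 L0 h0 hL hc SA SG).
Qed.
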